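(* Let $(a_i)_{i\in\mathbb{Z}}$ and $(b_i)_{i\in\mathbb{Z}}$ be jointly stationary processes, with $a_i$ taking values in the positive integers and $b_i$ in a finite or countable alphabet, such that: (i) $(a_i)$ is i.i.d.; (ii) each $a_i$ is independent of the joint collection $\{a_j: j<i\}\cup\{b_j:j<i\}$; (iii) each $b_i$ is almost surely determined by $a_i,b_{i-1},b_{i-2},\dots,b_{i-a_i}$. Then the pair process $((a_i,b_i))_{i\in\mathbb{Z}}$ is a uniform martingale.
   Context: A stationary process $(X_i)_{i\in\mathbb{Z}}$ on a finite or countable alphabet is a uniform martingale if the conditional distribution of $X_0$ given $X_{-1},\dots,X_{-n}$ converges as $n\to\infty$ to the conditional distribution of $X_0$ given the entire past $X_{-1},X_{-2},\dots$ in total variation, uniformly over all pasts. *)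

(* Defs.v *)
From HB Require Import structures.
From mathcomp Require Import all_boot all_order all_algebra.
From mathcomp Require Import all_classical all_reals all_analysis.
Set Implicit Arguments. Unset Strict Implicit. Unset Printing Implicit Defensive.
Import Order.TTheory GRing.Theory Num.Theory.
Local Open Scope classical_set_scope.
Local Open Scope ring_scope.

(* Cylinder sets of pasts (sequences indexed by nat: p k = value at time -(k+1)) *)
Definition cyl (A : Type) (n : nat) (q : nat -> A) : set (nat -> A) :=
  [set p | forall k, (k < n)%N -> p k = q k].
Definition cylinders (A : Type) : set (set (nat -> A)) :=
  [set C | exists n q, C = cyl n q].

Section Processes.
Context {d : measure_display} {T : measurableType d} {R : realType}
  (P : probability T R).

Definition discrete_rv (A : Type) (X : T -> A) : Prop :=
  forall x, measurable (X @^-1` [set x]).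

Definition stationary (A : Type) (X : int -> T -> A) : Prop :=
  forall (m k : int) (n : nat) (v : nat -> A),
    P [set w | forall j, (j < n)%N -> X (m + j%:Z) w = v j] =
    P [set w | forall j, (j < n)%N -> X (m + k + j%:Z) w = v j].

Definition mutually_independent (A : Type) (X : int -> T -> A) : Prop :=
  forall (s : seq int), uniq s -> forall v : int -> A,
    P [set w | forall i, i \in s -> X i w = v i] =
    (\prod_(i <- s) P (X i @^-1` [set v i]))%E.

Definition identically_distributed (A : Type) (X : int -> T -> A) : Prop :=
  forall i x, P (X i @^-1` [set x]) = P (X 0 @^-1` [set x]).

Definition iid (A : Type) (X : int -> T -> A) : Prop :=
  mutually_independent X /\ identically_distributed X.

Definition past (A : Type) (X : int -> T -> A) (w : T) : nat -> A :=
  fun k => X (- (k.+1)%:Z) w.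

Definition past_event (A : Type) (X : int -> T -> A) (n : nat) (q : nat -> A)
  : set T := past X @^-1` cyl n q.

Definition condP (A : Type) (X : int -> T -> A) (n : nat) (q : nat -> A) (x : A)
  : R :=
  fine (P (X 0 @^-1` [set x] `&` past_event X n q)) / fine (P (past_event X n q)).

(* uniform martingale: there is a version g of the regular conditional
   distribution of X_0 given the entire past (a probability kernel from pasts,
   measurable for the product sigma-algebra, satisfying the defining identity
   on the generating cylinder events), and the finite-past conditional
   distributions converge to it in total variation uniformly over all pasts
   (in the support, i.e. all of whose finite cylinders have positive
   probability, so that the finite conditionals are defined). *)
Definition uniform_martingale (A : countType) (X : int -> T -> A) : Prop :=
  exists g : (nat -> A) -> A -> R,
    [/\ (forall p x, 0 <= g p x),
        (forall p, (\esum_(x in [set: A]) (g p x)%:E = 1)%E),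
        (* g(x | .) is measurable for the sigma-algebra on pasts generated by
           cylinders (= product of the discrete sigma-algebras) *)
        (forall x (Y : set R), measurable Y ->
           <<s @cylinders A >> ((fun p => g p x) @^-1` Y)),
        (forall n q x, P (X 0 @^-1` [set x] `&` past_event X n q) =
           (\int[P]_(w in past_event X n q) (g (past X w) x)%:E)%E) &
        (forall eps : R, 0 < eps -> exists N : nat, forall n, (N <= n)%N ->
           forall q : nat -> A, (forall m, (0 < P (past_event X m q))%E) ->
           (\esum_(x in [set: A]) (`|condP X n q x - g q x|)%:E <= eps%:E)%E)].

End Processes.

(* Main.v *)
Require Import Defs.
From HB Require Import structures.
From mathcomp Require Import all_boot all_order all_algebra.
From mathcomp Require Import all_classical all_reals all_analysis.
From mathcomp Require Import ring lra.
Import Order.TTheory GRing.Theory Num.Theory.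
Local Open Scope classical_set_scope.
Local Open Scope ring_scope.
Set Implicit Arguments. Unset Strict Implicit.

Section Aux.
Context {d : measure_display} {T : measurableType d} {R : realType}
  (P : probability T R).

Definition pr (A : set T) : R := fine (P A).

Lemma prE A : measurable A -> P A = (pr A)%:E.
Proof. by move=> mA; rewrite /pr fineK // fin_num_measure. Qed.

Lemma pr_ge0 A : 0 <= pr A.
Proof. by rewrite /pr fine_ge0. Qed.

Lemma pr_le A B : measurable A -> measurable B -> A `<=` B -> pr A <= pr B.
Proof.
move=> mA mB AB; rewrite -lee_fin -!prE //.
by apply: (le_measure P) => //; rewrite inE.
Qed.

Lemma prU A B : measurable A -> measurable B -> A `&` B = set0 ->
  pr (A `|` B) = pr A + pr B.
Proof.
move=> mA mB AB; apply: EFin_inj; rewrite EFinD -!prE //; last exact: measurableU.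
by rewrite measureU.
Qed.

Lemma prT : pr setT = 1.
Proof. by rewrite /pr probability_setT. Qed.

Lemma pr_fin_bigcup (I : choiceType) (D : set I) (F : I -> set T) :
  finite_set D -> trivIset D F -> (forall i, measurable (F i)) ->
  pr (\bigcup_(i in D) F i) = \sum_(i \in D) pr (F i).
Proof.
move=> fD tF mF; apply: EFin_inj; rewrite -fsumEFin //.
rewrite -prE; last by apply: fin_bigcup_measurable.
rewrite measure_fin_bigcup //; apply: eq_fsbigr => i _; exact: prE.
Qed.

Lemma ae_le A A' (N : set T) : measurable A -> measurable A' -> measurable N ->
  P N = 0%E -> (forall w, ~ N w -> A w -> A' w) -> (P A <= P A')%E.
Proof.
move=> mA mA' mN N0 h.
apply: (@le_trans _ _ (P (A' `|` N))).
  apply: (le_measure P); rewrite ?inE //; first exact: measurableU.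
  move=> w Aw; have [Nw|Nw] := pselect (N w); first by right.
  by left; apply: h.
apply: (le_trans (measureU2 P mA' mN)); rewrite [X in (_ + X)%E](_ : _ = 0%E) ?adde0 //.
Qed.

End Aux.

Definition detm (A : Type) (m : nat) (Q : set (nat -> A)) :=
  forall p p', (forall k, (k < m)%N -> p k = p' k) -> Q p -> Q p'.

Definition pcell (A : countType) (m : nat) (Q : set (nat -> A)) (k : nat) :=
  Q `&` [set p | pickle (mkseq p m) = k].

Lemma mkseq_eqP (A : countType) (m : nat) (p p' : nat -> A) :
  mkseq p m = mkseq p' m <-> (forall k, (k < m)%N -> p k = p' k).
Proof.
split.
  move=> E k km; have := congr1 (fun s => nth (p 0%N) s k) E.
  by rewrite /= !nth_mkseq.
move=> h; rewrite /mkseq; apply/eq_in_map => k; rewrite mem_iota add0n.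
by move=> /andP[_ /h].
Qed.

Lemma pcell_cover (A : countType) m (Q : set (nat -> A)) :
  Q = \bigcup_k pcell m Q k.
Proof.
apply/seteqP; split => [p Qp|p [k _ []//]].
by exists (pickle (mkseq p m)).
Qed.

Lemma pcell_triv (A : countType) m (Q : set (nat -> A)) :
  trivIset setT (pcell m Q).
Proof.
by move=> i j _ _ [p [[_ <-] [_ <-]]].
Qed.

Lemma pcell_cases (A : countType) m (Q : set (nat -> A)) k : detm m Q ->
  pcell m Q k = set0 \/ exists p0, pcell m Q k = cyl m p0.
Proof.
move=> dQ; have [[p0 Cp0]|N] := pselect (exists p0, pcell m Q k p0); last first.
  by left; apply/seteqP; split => p // Cp; apply: N; exists p.
right; exists p0; case: Cp0 => Qp0 pk.
apply/seteqP; split => p.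
  move=> [_ ek] k' k'm; apply/(mkseq_eqP m p p0).1 => //; rewrite /= in pk ek.
  by apply: (pcan_inj (@pickleK _)); rewrite ek pk.
move=> /= h; split.
  by apply: (dQ p0) => // k' k'm; rewrite h.
by rewrite /= (mkseq_eqP m p p0).2.
Qed.

Lemma meas_cyl (R : realType) (A : countType) m (f : (nat -> A) -> R) :
  (forall p p', (forall k, (k < m)%N -> p k = p' k) -> f p = f p') ->
  forall Y, <<s @cylinders A >> (f @^-1` Y).
Proof.
move=> hf Y.
have dQ : detm m (f @^-1` Y) by move=> p p' h; rewrite /preimage /= (hf p p' h).
rewrite (pcell_cover m (f @^-1` Y)); apply: sigma_algebra_bigcup => k.
have [->|[p0 ->]] := pcell_cases k dQ; first exact: sigma_algebra0.
by apply: sub_sigma_algebra; exists m, p0.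
Qed.

Section Proc.
Context {d : measure_display} {T : measurableType d} {R : realType}
  (P : probability T R) (B : countType) (a : int -> T -> nat) (b : int -> T -> B).
Context (ma : forall i, discrete_rv (a i)) (mb : forall i, discrete_rv (b i)).
Context (hI : forall (i : int) (s : seq int), all (fun j => j < i) s ->
     forall (x : nat) (v : int -> nat * B),
       P [set w | a i w = x /\ forall j, j \in s -> (a j w, b j w) = v j] =
       (P (a i @^-1` [set x]) *
        P [set w | forall j, j \in s -> (a j w, b j w) = v j])%E).

Context (F0 : nat -> seq B -> B)
 (hF0 : {ae P, forall w, b 0 w = F0 (a 0 w) (mkseq (fun k => b (0 - (k.+1)%:Z) w) (a 0 w))}).

Local Notation X := (fun i w => (a i w, b i w)).

Lemma mX i (z : nat * B) : measurable (X i @^-1` [set z]).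
Proof.
have -> : X i @^-1` [set z] = a i @^-1` [set z.1] `&` b i @^-1` [set z.2].
  apply/seteqP; split => w /=; first by move=> <-.
  by case: z => x y /= [-> ->].
by apply: measurableI; [exact: ma | exact: mb].
Qed.

Lemma past_eventS n q : past_event X n.+1 q =
  past_event X n q `&` X (- (n.+1)%:Z) @^-1` [set q n].
Proof.
apply/seteqP; split => w /=.
  move=> h; split; first by move=> k kn; apply: h; rewrite ltnS ltnW.
  exact: h.
move=> [h1 h2] k; rewrite ltnS leq_eqVlt => /orP[/eqP->|kn]; first exact: h2.
exact: h1.
Qed.

Lemma past_event0 q : past_event X 0 q = setT.
Proof. by apply/seteqP; split => w //= _ k. Qed.

Lemma mpast n q : measurable (past_event X n q).
Proof.
elim: n => [|n IH]; first by rewrite past_event0.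
rewrite past_eventS; apply: measurableI => //; exact: mX.
Qed.

Lemma hind n q x : P (a 0 @^-1` [set x] `&` past_event X n q) =
  (P (a 0 @^-1` [set x]) * P (past_event X n q))%E.
Proof.
pose s := [seq - (k.+1)%:Z | k <- iota 0 n].
pose v := fun j : int => q (`|j|%N).-1.
have sE : [set w | forall j, j \in s -> (a j w, b j w) = v j] = past_event X n q.
  apply/seteqP; split => w /=.
    move=> h k kn; rewrite /past.
    have -> : q k = v (- (k.+1)%:Z) by rewrite /v abszN absz_nat.
    by apply: h; apply/mapP; exists k => //; rewrite mem_iota.
  move=> h j /mapP [k]; rewrite mem_iota add0n => /andP[_ kn] ->.
  by rewrite /v abszN absz_nat; exact: h.
have := @hI 0 s _ x v; rewrite sE => <-.
  by congr (P _); apply/seteqP; split => w /= [h1 h2]; split => //;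
    move: h2; rewrite -sE.
by rewrite all_map; apply/allP => k _ /=; rewrite oppr_lt0.
Qed.


Lemma prhind n q x : pr P (a 0 @^-1` [set x] `&` past_event X n q) =
  pr P (a 0 @^-1` [set x]) * pr P (past_event X n q).
Proof.
apply: EFin_inj; rewrite EFinM -!prE ?hind //; [exact: mpast|exact: ma|].
by apply: measurableI; [exact: ma|exact: mpast].
Qed.

Lemma ltSE m : [set w | (a 0 w < m.+1)%N] =
  [set w | (a 0 w < m)%N] `|` a 0 @^-1` [set m].
Proof.
apply/seteqP; split => w /=; first by rewrite ltnS leq_eqVlt => /orP[/eqP->|]; [right|left].
by case=> [/ltnW|->] //; rewrite ltnS.
Qed.

Lemma m_lt m : measurable [set w | (a 0 w < m)%N].
Proof.
elim: m => [|m IH].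
  by rewrite (_ : [set w | _] = set0) //; apply/seteqP; split => w.
rewrite ltSE; apply: measurableU => //; exact: ma.
Qed.

Lemma m_ge m : measurable [set w | (m <= a 0 w)%N].
Proof.
rewrite (_ : [set w | _] = ~` [set w | (a 0 w < m)%N]); first exact/measurableC/m_lt.
by apply/seteqP; split => w /=; case: ltnP.
Qed.

Lemma hind_lt n q m : pr P ([set w | (a 0 w < m)%N] `&` past_event X n q) =
  pr P [set w | (a 0 w < m)%N] * pr P (past_event X n q).
Proof.
elim: m => [|m IH].
  rewrite (_ : [set w | _] = set0); last by apply/seteqP; split => w.
  by rewrite set0I /pr measure0 mul0r.
rewrite ltSE setIUl !prU //.
- by rewrite IH prhind mulrDl.
- exact: m_lt.
- exact: ma.
- by apply/seteqP; split => w //= [lt eq]; rewrite eq ltnn in lt.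
- by apply: measurableI; [exact: m_lt|exact: mpast].
- by apply: measurableI; [exact: ma|exact: mpast].
- by apply/seteqP; split => w //= [[lt _] [eq _]]; rewrite eq ltnn in lt.
Qed.

Lemma hind_ge n q m : pr P ([set w | (m <= a 0 w)%N] `&` past_event X n q) =
  pr P [set w | (m <= a 0 w)%N] * pr P (past_event X n q).
Proof.
have cE : [set w | (m <= a 0 w)%N] = ~` [set w | (a 0 w < m)%N].
  by apply/seteqP; split => w /=; case: ltnP.
have h1 : pr P (past_event X n q) = pr P ([set w | (a 0 w < m)%N] `&` past_event X n q)
   + pr P ([set w | (m <= a 0 w)%N] `&` past_event X n q).
  rewrite -prU; first by rewrite -setIUl cE setUCr setTI.
  - by apply: measurableI; [exact: m_lt|exact: mpast].
  - by apply: measurableI; [exact: m_ge|exact: mpast].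
  - by rewrite cE setIACA setICr set0I.
have h2 : 1 = pr P [set w | (a 0 w < m)%N] + pr P [set w | (m <= a 0 w)%N].
  rewrite -prU; first by rewrite cE setUCr prT.
  - exact: m_lt.
  - exact: m_ge.
  - by rewrite cE setICr.
rewrite hind_lt in h1.
have -> : pr P [set w | (m <= a 0 w)%N] = 1 - pr P [set w | (a 0 w < m)%N].
  by rewrite h2; lra.
by rewrite mulrBl mul1r {1}h1 addrAC subrr add0r.
Qed.


Lemma IND x m (Q : set (nat -> nat * B)) : detm m Q ->
  measurable (past X @^-1` Q) /\
  P (a 0 @^-1` [set x] `&` past X @^-1` Q) =
    (P (a 0 @^-1` [set x]) * P (past X @^-1` Q))%E.
Proof.
move=> dQ.
pose D := fun k => past X @^-1` pcell m Q k.
have DE : past X @^-1` Q = \bigcup_k D k.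
  by rewrite {1}(pcell_cover m Q) preimage_bigcup.
have mD k : measurable (D k).
  rewrite /D; have [->|[p0 ->]] := pcell_cases k dQ; first by rewrite preimage_set0.
  exact: mpast.
have hD k : P (a 0 @^-1` [set x] `&` D k) = (P (a 0 @^-1` [set x]) * P (D k))%E.
  rewrite /D; have [->|[p0 ->]] := pcell_cases k dQ; last exact: hind.
  by rewrite preimage_set0 setI0 measure0 mule0.
have tD : trivIset setT D.
  move=> i j _ _ [w [Di Dj]]; have := @pcell_triv _ m Q i j; apply => //.
  by exists (past X w).
split; first by rewrite DE; exact: bigcupT_measurable.
rewrite DE setI_bigcupr measure_bigcup //=; last first.
- move=> i j _ _ [w [[_ Di] [_ Dj]]]; apply: tD => //; by exists w.
- by move=> k _; apply: measurableI => //; exact: ma.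
rewrite measure_bigcup //= -[in RHS](fineK (fin_num_measure P _ (ma 0 x))).
rewrite -nneseriesZl //; apply: eq_eseriesr => k _.
by rewrite hD (fineK (fin_num_measure P _ (ma 0 x))).
Qed.


Definition win (p : nat -> nat * B) (x : nat) := mkseq (fun k => (p k).2) x.
Definition Sx (z : nat * B) := [set p : nat -> nat * B | z.2 = F0 z.1 (win p z.1)].

Lemma win_past w x : win (past X w) x = mkseq (fun k => b (0 - (k.+1)%:Z) w) x.
Proof. by rewrite /win /past; apply: eq_mkseq => k /=; rewrite sub0r. Qed.

Lemma key n q z : P (X 0 @^-1` [set z] `&` past_event X n q) =
  (P (a 0 @^-1` [set z.1]) * P (past_event X n q `&` past X @^-1` Sx z))%E.
Proof.
case: z => x y /=.
pose Q := [set p | cyl n q p /\ y = F0 x (win p x)].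
have dQ : detm (maxn n x) Q.
  move=> p p' h [c e]; split.
    move=> k kn; rewrite -h; first exact: c.
    exact: leq_trans kn (leq_maxl n x).
  rewrite e; congr F0; apply/mkseq_eqP => k kx; rewrite h //.
  exact: leq_trans kx (leq_maxr n x).
have [mD hQ] := IND x dQ.
have -> : past_event X n q `&` past X @^-1` Sx (x, y) = past X @^-1` Q.
  by apply/seteqP; split => w [].
rewrite -hQ.
have [N [mN N0 sub]] := hF0.
have hw w : ~ N w -> b 0 w = F0 (a 0 w) (mkseq (fun k => b (0 - (k.+1)%:Z) w) (a 0 w)).
  move=> Nw; have [//|nh] := pselect (b 0 w = F0 (a 0 w)
     (mkseq (fun k => b (0 - (k.+1)%:Z) w) (a 0 w))).
  by exfalso; apply: Nw; apply: sub.
have m1 : measurable (X 0 @^-1` [set (x, y)] `&` past_event X n q).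
  by apply: measurableI; [exact: mX|exact: mpast].
have m2 : measurable (a 0 @^-1` [set x] `&` past X @^-1` Q).
  by apply: measurableI => //; exact: ma.
apply/le_anti/andP; split; apply: (ae_le m1 m2 mN N0) || apply: (ae_le m2 m1 mN N0).
- move=> w Nw [/= [ax bx] c]; split => //; split => //.
  by rewrite win_past -ax -bx; exact: hw.
- move=> w Nw [/= ax [c e]]; split => //=.
  by rewrite ax (hw w Nw) ax e win_past.
Qed.


Lemma tail e : 0 < e -> exists N, forall n, (N <= n)%N ->
  pr P [set w | (n <= a 0 w)%N] <= e.
Proof.
move=> e0.
pose F := fun n => [set w | (n <= a 0 w)%N].
have cF : (P \o F) x @[x --> \oo] --> P (\bigcap_n F n).
  apply: nonincreasing_cvg_mu.
  - by apply: (le_lt_trans (probability_le1 P (m_ge 0))); exact: ltey.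
  - move=> n; exact: m_ge.
  - by apply: bigcapT_measurable => n; exact: m_ge.
  - by move=> m n mn; apply/subsetPset => w /=; exact: leq_trans.
have bE : \bigcap_n F n = set0.
  apply/seteqP; split => w // h.
  by have := h (a 0 w).+1 I; rewrite /F /= ltnn.
rewrite bE measure0 in cF.
move: cF => /fine_cvg/cvgrPdist_le => /(_ e e0) [N _ HN].
exists N => n Nn; have := HN n Nn.
by rewrite sub0r normrN ger0_norm //; exact: pr_ge0.
Qed.

Definition gg (p : nat -> nat * B) (z : nat * B) : R :=
  pr P (a 0 @^-1` [set z.1]) * (z.2 == F0 z.1 (win p z.1))%:R.

Definition Gz (p : nat -> nat * B) (z : nat * B) : set T :=
  a 0 @^-1` [set z.1] `&` [set _ | z.2 = F0 z.1 (win p z.1)].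

Lemma pr0 : pr P set0 = 0.
Proof. by rewrite /pr measure0. Qed.

Lemma mGz p z : measurable (Gz p z).
Proof.
rewrite /Gz; have [e|e] := pselect (z.2 = F0 z.1 (win p z.1)).
  rewrite (_ : [set _ | _] = setT); last by apply/seteqP; split.
  by rewrite setIT; exact: ma.
rewrite (_ : [set _ | _] = set0); last by apply/seteqP; split.
by rewrite setI0.
Qed.

Lemma ggE p z : gg p z = pr P (Gz p z).
Proof.
rewrite /gg /Gz; case: eqP => e.
  rewrite (_ : [set _ | _] = setT); last by apply/seteqP; split.
  by rewrite setIT mulr1.
rewrite (_ : [set _ | _] = set0); last by apply/seteqP; split.
by rewrite setI0 pr0 mulr0.
Qed.

Lemma Gz_triv p : trivIset setT (Gz p).
Proof.
move=> [x y] [x' y'] _ _ [w [[/= e1 e2] [/= e1' e2']]].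
by rewrite -e1 -e1' in e2 e2' *; rewrite e2 e2'.
Qed.

Lemma gg_ge0 p z : 0 <= gg p z.
Proof. by rewrite ggE; exact: pr_ge0. Qed.

Lemma gg_meas z (Y : set R) : <<s @cylinders (nat * B) >> ((fun p => gg p z) @^-1` Y).
Proof.
apply: (@meas_cyl _ _ z.1) => p p' h.
by rewrite /gg /win (mkseq_eqP z.1 (fun k => (p k).2) (fun k => (p' k).2)).2 // => k /h ->.
Qed.

Lemma mSx z : measurable (past X @^-1` Sx z).
Proof.
have dQ : detm z.1 (Sx z).
  move=> p p' h; rewrite /Sx /= => ->; congr F0.
  by apply/mkseq_eqP => k /h ->.
by have [] := IND 0 dQ.
Qed.

Lemma gg_int n q z : P (X 0 @^-1` [set z] `&` past_event X n q) =
  (\int[P]_(w in past_event X n q) (gg (past X w) z)%:E)%E.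
Proof.
have ggI w : gg (past X w) z =
   pr P (a 0 @^-1` [set z.1]) * \1_(past X @^-1` Sx z) w.
  rewrite /gg /indic; congr (_ * _%:R).
  case: eqP => e; first by rewrite mem_set.
  by rewrite memNset.
rewrite key.
under eq_integral => w _ do rewrite ggI.
rewrite (@integralZl_indic _ _ _ P _ (mpast n q) (fun _ => past X @^-1` Sx z)) //.
- rewrite integral_indic //; last exact: mSx.
  rewrite setIC -prE //; last exact: ma.
  exact: mpast.
- by rewrite ltNge pr_ge0.
- exact: mSx.
Qed.

Lemma prkey n q z : pr P (X 0 @^-1` [set z] `&` past_event X n q) =
  pr P (a 0 @^-1` [set z.1]) * pr P (past_event X n q `&` past X @^-1` Sx z).
Proof.
apply: EFin_inj; rewrite EFinM -!prE -?key //.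
- by apply: measurableI; [exact: mpast|exact: mSx].
- exact: ma.
- by apply: measurableI; [exact: mX|exact: mpast].
Qed.

Lemma gg_sum p : (\esum_(z in [set: nat * B]) (gg p z)%:E)%E = 1%E.
Proof.
have tG (F : set (nat * B)) : trivIset F (Gz p).
  by move=> i j _ _; apply: Gz_triv.
apply/le_anti/andP; split.
  apply: ge_ereal_sup => _ [F [finF _] <-] /=.
  rewrite fsumEFin // lee_fin.
  rewrite (eq_fsbigr (fun z => pr P (Gz p z))); last by move=> z _; exact: ggE.
  rewrite -pr_fin_bigcup //; last exact: mGz.
  rewrite -(prT P); apply: pr_le => //.
  by apply: fin_bigcup_measurable => // i _; exact: mGz.
apply/lee_addgt0Pr => e e0; have [N HN] := tail e0.
pose FN := (fun x => (x, F0 x (win p x))) @` `I_N.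
have finFN : finite_set FN by apply: finite_image; exact: finite_II.
have -> : 1%E = ((pr P [set w | (a 0 w < N)%N] + pr P [set w | (N <= a 0 w)%N])%:E).
  rewrite -prU; [|exact: m_lt|exact: m_ge|].
    rewrite (_ : _ `|` _ = setT) ?prT //.
    by apply/seteqP; split => w // _ /=; case: ltnP; [left|right].
  by apply/seteqP; split => w // [/= h1 h2]; move: h2; rewrite leqNgt h1.
rewrite EFinD; apply: leeD; last by rewrite lee_fin HN.
apply: esum_ge; exists FN => //.
rewrite fsumEFin // lee_fin.
rewrite (eq_fsbigr (fun z => pr P (Gz p z))); last by move=> z _; exact: ggE.
rewrite -pr_fin_bigcup //; last exact: mGz.
apply: pr_le; [exact: m_lt| |].
  by apply: fin_bigcup_measurable => // i _; exact: mGz.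
move=> w /= wN; exists (a 0 w, F0 (a 0 w) (win p (a 0 w))).
  by exists (a 0 w).
by split.
Qed.

Lemma tv eps : 0 < eps -> exists N, forall n, (N <= n)%N ->
  forall q, (forall m, (0 < P (past_event X m q))%E) ->
  (\esum_(z in [set: nat * B]) (`|condP P X n q z - gg q z|)%:E <= eps%:E)%E.
Proof.
move=> eps0; have e0 : 0 < eps / 2 by rewrite divr_gt0.
have [N HN] := tail e0.
exists N => n Nn q qsupp.
set E := past_event X n q.
have mE : measurable E by exact: mpast.
have pE0 : 0 < pr P E by have := qsupp n; rewrite prE // lte_fin.
pose H z := if (n < z.1)%N then X 0 @^-1` [set z] `&` E else set0.
pose G z := if (n < z.1)%N then Gz q z else set0.
have mH z : measurable (H z).
  by rewrite /H; case: ifP => _ //; apply: measurableI => //; exact: mX.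
have mG z : measurable (G z) by rewrite /G; case: ifP => _ //; exact: mGz.
have cE z : condP P X n q z = pr P (X 0 @^-1` [set z] `&` E) / pr P E by [].
have bnd z : `|condP P X n q z - gg q z| <= pr P (H z) / pr P E + pr P (G z).
  rewrite /H /G; case: ltnP => nz.
    rewrite cE ggE; apply: le_trans (ler_normB _ _) _.
    rewrite !ger0_norm //; [exact: pr_ge0 | by apply: divr_ge0; exact: pr_ge0].
  have SE : pr P (E `&` past X @^-1` Sx z) =
      (z.2 == F0 z.1 (win q z.1))%:R * pr P E.
    have wE w : E w -> win (past X w) z.1 = win q z.1.
      move=> Ew; apply/mkseq_eqP => k kz; rewrite Ew //.
      exact: leq_trans kz nz.
    case: eqP => e.
      rewrite mul1r (_ : _ `&` _ = E) //; apply/seteqP; split => w; first by case.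
      by move=> Ew; split => //; rewrite /Sx /= wE.
    rewrite mul0r (_ : _ `&` _ = set0) ?pr0 //; apply/seteqP; split => w //.
    by move=> [Ew]; rewrite /Sx /= wE.
  rewrite cE prkey SE mulrA mulfK ?gt_eqF // /gg subrr normr0.
  by rewrite pr0 mul0r addr0.
apply: ge_ereal_sup => _ [F [finF _] <-] /=.
apply: le_trans.
  apply: (lee_fsum (b := fun z => (pr P (H z) / pr P E + pr P (G z))%:E) finF).
  by move=> z _; rewrite lee_fin; exact: bnd.
rewrite fsumEFin // lee_fin fsbig_split // -mulr_fsuml -!pr_fin_bigcup //; last first.
- move=> i j _ _ [w [Hi Hj]]; move: Hi Hj; rewrite /H.
  case: ifP => _; last by move=> [].
  case: ifP => _; last by move=> _ [].
  by move=> [/= e1 _] [/= e2 _]; rewrite -e1 -e2.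
- move=> i j _ _ [w [Gi Gj]]; move: Gi Gj; rewrite /G.
  case: ifP => _; last by move=> [].
  case: ifP => _; last by move=> _ [].
  move=> Gi Gj; have := @Gz_triv q i j I I; apply; by exists w.
have h3 := HN n.+1 (leq_trans Nn (leqnSn n)).
have h1 : pr P (\bigcup_(z in F) H z) / pr P E <= pr P [set w | (n.+1 <= a 0 w)%N].
  rewrite ler_pdivrMr // -hind_ge; apply: pr_le.
  - by apply: fin_bigcup_measurable.
  - by apply: measurableI => //; exact: m_ge.
  move=> w [z _]; rewrite /H; case: ifP => nz; last by move=> [].
  by move=> [/= e1 Ew]; split => //=; rewrite -e1 /= in nz.
have h2 : pr P (\bigcup_(z in F) G z) <= pr P [set w | (n.+1 <= a 0 w)%N].
  apply: pr_le; [by apply: fin_bigcup_measurable|exact: m_ge|].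
  move=> w [z _]; rewrite /G; case: ifP => nz; last by move=> [].
  by move=> [/= e1 _]; rewrite /= e1.
apply: le_trans; first exact: lerD h1 h2.
lra.
Qed.

End Proc.

Unset Implicit Arguments.
Theorem mainTheorem10 (d : measure_display) (T : measurableType d) (R : realType)
  (P : probability T R) (B : countType)
  (a : int -> T -> nat) (b : int -> T -> B) :
  (forall i, discrete_rv (a i)) ->
  (forall i, discrete_rv (b i)) ->
  (forall i w, (0 < a i w)%N) ->
  stationary P (fun i w => (a i w, b i w)) ->
  iid P a ->
  (forall (i : int) (s : seq int), all (fun j => j < i) s ->
     forall (x : nat) (v : int -> nat * B),
       P [set w | a i w = x /\ forall j, j \in s -> (a j w, b j w) = v j] =
       (P (a i @^-1` [set x]) *
        P [set w | forall j, j \in s -> (a j w, b j w) = v j])%E) ->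
  (forall i : int, exists F : nat -> seq B -> B,
     {ae P, forall w,
        b i w = F (a i w) (mkseq (fun k => b (i - (k.+1)%:Z) w) (a i w))}) ->
  uniform_martingale P (fun i w => (a i w, b i w)).
Proof.
move=> ma mb apos stat iidA hI hF.
have [F0 hF0] := hF 0.
exists (@gg d T R P B a F0); split.
- move=> p z; exact: gg_ge0.
- move=> p; exact: gg_sum.
- move=> z Y _; exact: gg_meas.
- move=> n q z; exact: (gg_int ma mb hI hF0).
- move=> eps eps0; exact: (tv ma mb hI hF0 eps0).
Qed.
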